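(* Let $G$ be a finitely generated group. Then $RF(G)$ is finitely presented if and only if $RF_{na}(G)$ is finitely presented.
   Context: $\mathbb F$ denotes a non-abelian free group. $RF(G)$ is the quotient of $G$ by the intersection of the kernels of all homomorphisms $G\to\mathbb F$; $RF_{na}(G)$ is the quotient of $G$ by the intersection of the kernels of all homomorphisms $G\to\mathbb F$ with non-abelian image. *)

(* Defs.v *)
From Stdlib Require Import List ClassicalEpsilon FunctionalExtensionality
  PropExtensionality ProofIrrelevance.
Set Implicit Arguments.
Unset Strict Implicit.

Record grp : Type := Grp {
  car :> Type;
  gmul : car -> car -> car;
  ginv : car -> car;
  gone : car;
  gmulA : forall x y z, gmul x (gmul y z) = gmul (gmul x y) z;
  gmul1 : forall x, gmul gone x = x;
  gmulV : forall x, gmul (ginv x) x = gone }.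
Arguments gmul {g} _ _.
Arguments ginv {g} _.
Arguments gone {g}.

Section GroupBasics.
Variable G : grp.
Implicit Types x y z : G.

Lemma mulgVr x : gmul x (ginv x) = gone.
Proof.
  transitivity (gmul (gmul (ginv (ginv x)) (ginv x)) (gmul x (ginv x))).
  - now rewrite gmulV, gmul1.
  - rewrite <- gmulA, (@gmulA G (ginv x) x (ginv x)), gmulV, gmul1.
    apply gmulV.
Qed.

Lemma mulg1 x : gmul x gone = x.
Proof. rewrite <- (@gmulV G x), gmulA, mulgVr. apply gmul1. Qed.

Lemma mulKV x y : gmul x (gmul (ginv x) y) = y.
Proof. rewrite gmulA, mulgVr. apply gmul1. Qed.

Lemma mulVK x y : gmul (ginv x) (gmul x y) = y.
Proof. rewrite gmulA, gmulV. apply gmul1. Qed.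

Lemma inv_uniq_l x y : gmul y x = gone -> y = ginv x.
Proof.
  intro H. rewrite <- (mulg1 y), <- (mulgVr x), gmulA, H. apply gmul1.
Qed.

Lemma invK x : ginv (ginv x) = x.
Proof. symmetry. apply inv_uniq_l. apply mulgVr. Qed.

Lemma invM x y : ginv (gmul x y) = gmul (ginv y) (ginv x).
Proof.
  symmetry. apply inv_uniq_l.
  rewrite <- gmulA, (@gmulA G (ginv x) x y), gmulV, gmul1. apply gmulV.
Qed.

Lemma inv1 : ginv (@gone G) = gone.
Proof. symmetry. apply inv_uniq_l. apply gmul1. Qed.

End GroupBasics.

Definition is_hom (G H : grp) (f : G -> H) : Prop :=
  forall x y : G, f (gmul x y) = gmul (f x) (f y).

Lemma hom1 (G H : grp) (f : G -> H) : is_hom f -> f gone = gone.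
Proof.
  intro Hf. assert (E : f gone = gmul (f gone) (f gone)).
  { rewrite <- Hf. now rewrite gmul1. }
  transitivity (gmul (ginv (f gone)) (gmul (f gone) (f gone))).
  - symmetry. apply mulVK.
  - rewrite <- E. apply gmulV.
Qed.

Lemma homV (G H : grp) (f : G -> H) x : is_hom f -> f (ginv x) = ginv (f x).
Proof.
  intro Hf. apply inv_uniq_l. rewrite <- Hf, gmulV. now apply hom1.
Qed.

Definition subgroup (G : grp) (S : G -> Prop) : Prop :=
  S gone /\ (forall x y, S x -> S y -> S (gmul x y)) /\ (forall x, S x -> S (ginv x)).

Definition normal (G : grp) (N : G -> Prop) : Prop :=
  subgroup N /\ (forall g x : G, N x -> N (gmul (gmul (ginv g) x) g)).

Definition fin_gen (G : grp) : Prop :=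
  exists (n : nat) (gen : {i : nat | i < n} -> G),
    forall (S : G -> Prop), subgroup S -> (forall i, S (gen i)) -> forall y, S y.

Section Quotient.
Variable G : grp.
Variable K : G -> Prop.
Hypothesis HK : normal K.

Definition cls (g : G) : G -> Prop := fun y => K (gmul (ginv g) y).
Definition Qcar : Type := {P : G -> Prop | exists g, P = cls g}.
Definition qmk (g : G) : Qcar := exist _ (cls g) (ex_intro _ g eq_refl).
Definition qrep (A : Qcar) : G :=
  proj1_sig (constructive_indefinite_description _ (proj2_sig A)).
Lemma qrepP (A : Qcar) : proj1_sig A = cls (qrep A).
Proof. unfold qrep. exact (proj2_sig (constructive_indefinite_description (fun g => proj1_sig A = cls g) (proj2_sig A))). Qed.

Lemma qmk_rep A : qmk (qrep A) = A.
Proof.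
  destruct A as [P HP]. unfold qmk. apply subset_eq_compat.
  symmetry. exact (qrepP (exist _ P HP)).
Qed.

Lemma qmk_surj A : exists g, A = qmk g.
Proof. exists (qrep A). symmetry. apply qmk_rep. Qed.

Lemma qmk_eq g h : K (gmul (ginv g) h) -> qmk g = qmk h.
Proof.
  destruct HK as [[K1 [KM KV]] KC]. intro Hgh.
  unfold qmk. apply subset_eq_compat.
  apply functional_extensionality; intro y. apply propositional_extensionality.
  unfold cls. split; intro Hy.
  - replace (gmul (ginv h) y) with (gmul (ginv (gmul (ginv g) h)) (gmul (ginv g) y)).
    + apply KM; auto.
    + rewrite invM, invK, <- gmulA. now rewrite mulKV.
  - replace (gmul (ginv g) y) with (gmul (gmul (ginv g) h) (gmul (ginv h) y)).
    + apply KM; auto.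
    + rewrite <- gmulA. now rewrite mulKV.
Qed.

Lemma rep_mk g : K (gmul (ginv (qrep (qmk g))) g).
Proof.
  destruct HK as [[K1 _] _].
  pose proof (qrepP (qmk g)) as E. simpl in E.
  change (cls (qrep (qmk g)) g). rewrite <- E. unfold cls. now rewrite gmulV.
Qed.

Definition qmul (A B : Qcar) : Qcar := qmk (gmul (qrep A) (qrep B)).
Definition qinv (A : Qcar) : Qcar := qmk (ginv (qrep A)).
Definition qone : Qcar := qmk gone.

Lemma mul_mk g h : qmul (qmk g) (qmk h) = qmk (gmul g h).
Proof.
  destruct HK as [[K1 [KM KV]] KC]. unfold qmul. apply qmk_eq.
  set (r := qrep (qmk g)). set (s := qrep (qmk h)).
  replace (gmul (ginv (gmul r s)) (gmul g h)) with
    (gmul (gmul (gmul (ginv s) (gmul (ginv r) g)) s) (gmul (ginv s) h)).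
  - apply KM. + apply KC. apply rep_mk. + apply rep_mk.
  - rewrite invM. repeat rewrite <- gmulA. now rewrite mulKV.
Qed.

Lemma inv_mk g : qinv (qmk g) = qmk (ginv g).
Proof.
  destruct HK as [[K1 [KM KV]] KC]. unfold qinv. apply qmk_eq.
  set (r := qrep (qmk g)).
  replace (gmul (ginv (ginv r)) (ginv g)) with
    (gmul (gmul (ginv (ginv r)) (ginv (gmul (ginv r) g))) (ginv r)).
  - apply KC. apply KV. apply rep_mk.
  - rewrite invM, !invK. repeat rewrite <- gmulA. now rewrite mulgVr, mulg1.
Qed.

Lemma qmulA A B C : qmul A (qmul B C) = qmul (qmul A B) C.
Proof.
  destruct (qmk_surj A) as [a ->]. destruct (qmk_surj B) as [b ->].
  destruct (qmk_surj C) as [c ->]. now rewrite !mul_mk, gmulA.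
Qed.

Lemma qmul1 A : qmul qone A = A.
Proof. destruct (qmk_surj A) as [a ->]. unfold qone. now rewrite mul_mk, gmul1. Qed.

Lemma qmulV A : qmul (qinv A) A = qone.
Proof.
  destruct (qmk_surj A) as [a ->]. unfold qone. now rewrite inv_mk, mul_mk, gmulV.
Qed.

Definition quot : grp := Grp qmulA qmul1 qmulV.

End Quotient.

Definition kerI (G F : grp) (P : (G -> F) -> Prop) (g : G) : Prop :=
  forall f : G -> F, is_hom f -> P f -> f g = gone.

Lemma kerI_normal (G F : grp) (P : (G -> F) -> Prop) : normal (kerI P).
Proof.
  unfold kerI. split; [split; [|split]|].
  - intros f Hf _. now apply hom1.
  - intros x y Hx Hy f Hf Pf. rewrite Hf, Hx, Hy; auto. apply gmul1.
  - intros x Hx f Hf Pf. rewrite homV, Hx; auto. apply inv1.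
  - intros g x Hx f Hf Pf. rewrite !Hf, homV, Hx; auto.
    rewrite mulg1. apply gmulV.
Qed.

Definition nonabelian (F : grp) : Prop :=
  exists a b : F, gmul a b <> gmul b a.

Definition na_image (G F : grp) (f : G -> F) : Prop :=
  exists a b : G, gmul (f a) (f b) <> gmul (f b) (f a).

Definition RF (F G : grp) : grp :=
  quot (kerI_normal (fun _ : G -> F => True)).
Definition RFna (F G : grp) : grp :=
  quot (kerI_normal (@na_image G F)).

Definition is_free_on (F : grp) (X : Type) (x : X -> F) : Prop :=
  forall (H : grp) (h : X -> H),
    exists phi : F -> H, is_hom phi /\ (forall i, phi (x i) = h i) /\
      (forall psi : F -> H, is_hom psi -> (forall i, psi (x i) = h i) ->
         forall w, psi w = phi w).

Definition is_free (F : grp) : Prop :=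
  exists (X : Type) (x : X -> F), is_free_on x.

Definition normal_closure (G : grp) (R : list G) (w : G) : Prop :=
  forall N : G -> Prop, normal N -> (forall r, In r R -> N r) -> N w.

(* H is finitely presented: H is isomorphic to F_n / <<R>> with R finite,
   i.e. there is a surjective hom from a free group of finite rank n onto H
   whose kernel is the normal closure of a finite set. *)
Definition fin_pres (H : grp) : Prop :=
  exists (n : nat) (F : grp) (x : {i : nat | i < n} -> F), is_free_on x /\
    exists phi : F -> H, is_hom phi /\ (forall y, exists w, phi w = y) /\
      exists R : list F, forall w, phi w = gone <-> normal_closure R w.

(* Main.v *)
Require Import Defs.
From Stdlib Require Import List ZArith Arith Lia ClassicalEpsilon Classical FunctionalExtensionality PropExtensionality ProofIrrelevance.
Set Implicit Arguments.
Unset Strict Implicit.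


Lemma inv_uniq_r (G : grp) (x y : G) : gmul x y = gone -> y = ginv x.
Proof.
  intro H. rewrite <- (gmul1 y), <- (gmulV x), <- gmulA, H. apply mulg1.
Qed.

Lemma mulg_cancel_l (G : grp) (a x y : G) : gmul a x = gmul a y -> x = y.
Proof. intro H. rewrite <- (mulVK a x), H. apply mulVK. Qed.

Lemma eq_of_div (G : grp) (x y : G) : gmul (ginv x) y = gone -> x = y.
Proof. intro H. rewrite <- (mulKV x y), H. now rewrite mulg1. Qed.

Definition gen (H : grp) (P : H -> Prop) (x : H) : Prop :=
  forall T, subgroup T -> (forall y, P y -> T y) -> T x.
Definition ngen (H : grp) (P : H -> Prop) (x : H) : Prop :=
  forall T, normal T -> (forall y, P y -> T y) -> T x.
Definition inl {A} (L : list A) : A -> Prop := fun y => In y L.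

Lemma gen_sub (H : grp) (P : H -> Prop) : subgroup (gen P).
Proof.
  split; [|split].
  - intros T [? [? ?]] _. auto.
  - intros x y Hx Hy T HT HP. pose proof (Hx T HT HP); pose proof (Hy T HT HP). destruct HT as [? [? ?]]; auto.
  - intros x Hx T HT HP. pose proof (Hx T HT HP). destruct HT as [? [? ?]]; auto.
Qed.

Lemma gen_incl (H : grp) (P : H -> Prop) y : P y -> gen P y.
Proof. intros Hy T HT HP. auto. Qed.

Lemma gen_mono (H : grp) (P Q : H -> Prop) : (forall y, P y -> Q y) -> forall y, gen P y -> gen Q y.
Proof. intros PQ y Hy T HT HQ. apply Hy; auto. Qed.

Lemma ngen_normal (H : grp) (P : H -> Prop) : normal (ngen P).
Proof.
  split; [split; [|split]|].
  - intros T [[? [? ?]] ?] _. auto.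
  - intros x y Hx Hy T HT HP. pose proof (Hx T HT HP); pose proof (Hy T HT HP). destruct HT as [[? [? ?]] ?]; auto.
  - intros x Hx T HT HP. pose proof (Hx T HT HP). destruct HT as [[? [? ?]] ?]; auto.
  - intros g x Hx T HT HP. pose proof (Hx T HT HP). destruct HT as [[? [? ?]] ?]; auto.
Qed.

Lemma ngen_incl (H : grp) (P : H -> Prop) y : P y -> ngen P y.
Proof. intros Hy T HT HP. auto. Qed.

Lemma ngen_mono (H : grp) (P Q : H -> Prop) : (forall y, P y -> Q y) -> forall y, ngen P y -> ngen Q y.
Proof. intros PQ y Hy T HT HQ. apply Hy; auto. Qed.

Lemma gen_ngen (H : grp) (P : H -> Prop) y : gen P y -> ngen P y.
Proof. intros Hy T HT HP. apply Hy; auto. apply HT. Qed.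

Lemma gen_image (H H' : grp) (f : H -> H') (Hf : is_hom f) (P : H -> Prop) (Q : H' -> Prop) :
  (forall y, P y -> Q (f y)) -> forall y, gen P y -> gen Q (f y).
Proof.
  intros PQ y Hy. apply (Hy (fun z => gen Q (f z))).
  - split; [|split].
    + rewrite hom1 by auto. apply gen_sub.
    + intros a b Ha Hb. rewrite Hf. apply gen_sub; auto.
    + intros a Ha. rewrite homV by auto. apply gen_sub; auto.
  - intros z Hz. apply gen_incl; auto.
Qed.

Lemma gen_lift (H H' : grp) (f : H -> H') (Hf : is_hom f) (P : H -> Prop) (Q : H' -> Prop) :
  (forall z, Q z -> exists y, P y /\ f y = z) -> forall z, gen Q z -> exists y, gen P y /\ f y = z.
Proof.
  intros PQ z Hz. apply (Hz (fun z => exists y, gen P y /\ f y = z)).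
  - split; [|split].
    + exists gone. split. apply gen_sub. now apply hom1.
    + intros a b [y1 [H1 E1]] [y2 [H2 E2]]. exists (gmul y1 y2). split. apply gen_sub; auto.
      now rewrite Hf, E1, E2.
    + intros a [y1 [H1 E1]]. exists (ginv y1). split. apply gen_sub; auto.
      now rewrite homV, E1.
  - intros w Hw. destruct (PQ w Hw) as [y [Py E]]. exists y. split; auto. now apply gen_incl.
Qed.

Lemma kernel_normal (H H' : grp) (f : H -> H') (Hf : is_hom f) : normal (fun x => f x = gone).
Proof.
  split; [split; [|split]|].
  - now apply hom1.
  - intros x y Hx Hy. now rewrite Hf, Hx, Hy, gmul1.
  - intros x Hx. now rewrite homV, Hx, inv1.
  - intros g x Hx. rewrite !Hf, homV, Hx, mulg1 by auto. apply gmulV.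
Qed.

Lemma kernel_sub (H H' : grp) (f : H -> H') (Hf : is_hom f) : subgroup (fun x => f x = gone).
Proof. apply (kernel_normal Hf). Qed.

Definition cent (H : grp) (y : H) : H -> Prop := fun x => gmul x y = gmul y x.

Lemma cent_sub (H : grp) (y : H) : subgroup (cent y).
Proof.
  unfold cent. split; [|split].
  - now rewrite gmul1, mulg1.
  - intros a b Ha Hb. now rewrite <- gmulA, Hb, gmulA, Ha, <- gmulA.
  - intros a Ha. rewrite <- (mulVK a (gmul y (ginv a))).
    rewrite (gmulA a y), Ha, <- gmulA, mulgVr, mulg1. reflexivity.
Qed.

Lemma comm_sym (H : grp) (x y : H) : gmul x y = gmul y x -> gmul y x = gmul x y.
Proof. auto. Qed.

Section PartB.

Fixpoint npow (H : grp) (a : H) (n : nat) : H :=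
  match n with O => gone | S n => gmul (npow a n) a end.

Local Open Scope Z_scope.
Definition zpow (H : grp) (a : H) (e : Z) : H :=
  if Z_le_dec 0 e then npow a (Z.to_nat e) else npow (ginv a) (Z.to_nat (- e)).

Lemma zpow0 (H : grp) (a : H) : zpow a 0 = gone.
Proof. unfold zpow. destruct (Z_le_dec 0 0); [reflexivity|lia]. Qed.

Lemma zpow_succ (H : grp) (a : H) e : zpow a (e + 1) = gmul (zpow a e) a.
Proof.
  unfold zpow. destruct (Z_le_dec 0 (e+1)) as [h1|h1]; destruct (Z_le_dec 0 e) as [h2|h2].
  - replace (Z.to_nat (e+1)) with (S (Z.to_nat e)) by lia. reflexivity.
  - assert (e = -1) by lia. subst. simpl. rewrite gmul1, gmulV. reflexivity.
  - lia.
  - replace (Z.to_nat (- e)) with (S (Z.to_nat (- (e+1)))) by lia. simpl.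
    rewrite <- gmulA, gmulV, mulg1. reflexivity.
Qed.

Lemma zpow_add (H : grp) (a : H) e f : zpow a (e + f) = gmul (zpow a e) (zpow a f).
Proof.
  revert f. apply Z.peano_ind.
  - now rewrite Z.add_0_r, zpow0, mulg1.
  - intros f IH. rewrite <- !Z.add_1_r, Z.add_assoc, !zpow_succ, IH. symmetry. apply gmulA.
  - intros f IH.
    assert (E : forall g, zpow a (Z.pred g) = gmul (zpow a g) (ginv a)).
    { intro g. replace (zpow a g) with (zpow a (Z.pred g + 1)) by (f_equal; lia).
      rewrite zpow_succ, <- gmulA, mulgVr, mulg1. reflexivity. }
    replace (e + Z.pred f) with (Z.pred (e + f)) by lia. rewrite !E, IH. symmetry. apply gmulA.
Qed.

Lemma zpow_opp (H : grp) (a : H) e : zpow a (- e) = ginv (zpow a e).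
Proof.
  apply inv_uniq_r. rewrite <- zpow_add. replace (e + - e) with 0 by lia. apply zpow0.
Qed.

Lemma zpow1 (H : grp) (a : H) : zpow a 1 = a.
Proof. replace 1 with (0 + 1) by lia. rewrite zpow_succ, zpow0. apply gmul1. Qed.

Lemma zpow_in (H : grp) (T : H -> Prop) (a : H) : subgroup T -> T a -> forall e, T (zpow a e).
Proof.
  intros [T1 [TM TV]] Ta e.
  assert (N : forall b, T b -> forall n, T (npow b n)).
  { intros b Tb n. induction n; simpl; auto. }
  unfold zpow. destruct (Z_le_dec 0 e); apply N; auto.
Qed.

Lemma nat_min (P : nat -> Prop) : (exists n, P n) -> exists n, P n /\ forall m, P m -> (n <= m)%nat.
Proof.
  intros [n Hn]. apply NNPP. intro Hno.
  assert (Hall : forall k, forall m, (m <= k)%nat -> ~ P m).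
  { induction k as [|k IH]; intros m Hm Pm.
    - apply Hno. exists m. split; auto. intros m' _. lia.
    - destruct (Nat.eq_dec m (S k)) as [->|Hne].
      + apply Hno. exists (S k). split; auto. intros m' Pm'.
        destruct (le_lt_dec (S k) m') as [|Hlt]; auto. exfalso. apply (IH m'); auto. lia.
      + apply (IH m); auto. lia. }
  apply (Hall n n); auto.
Qed.

Lemma Zsub_cyclic (E : Z -> Prop) : E 0 -> (forall x y, E x -> E y -> E (x + y)) -> (forall x, E x -> E (- x)) ->
  (forall x, E x -> x = 0) \/ exists d, 0 < d /\ E d /\ forall x, E x -> exists t, x = d * t.
Proof.
  intros E0 EA EN.
  destruct (classic (exists x, E x /\ x <> 0)) as [[x [Ex Hx]]|Hno].
  2:{ left. intros x Ex. apply NNPP. intro. apply Hno. eauto. }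
  right.
  assert (Ex' : exists n : nat, (0 < n)%nat /\ E (Z.of_nat n)).
  { destruct (Z_le_dec 0 x).
    - exists (Z.to_nat x). split. lia. now rewrite Z2Nat.id.
    - exists (Z.to_nat (- x)). split. lia. rewrite Z2Nat.id by lia. auto. }
  destruct (nat_min Ex') as [n [[Hn En] Hmin]].
  set (d := Z.of_nat n).
  assert (Emul : forall t, E (d * t)).
  { apply Z.peano_ind.
    - now rewrite Z.mul_0_r.
    - intros t IH. replace (d * Z.succ t) with (d * t + d) by lia. auto.
    - intros t IH. replace (d * Z.pred t) with (d * t + - d) by lia. auto. }
  exists d. split. lia. split. auto.
  intros y Ey. exists (y / d).
  assert (Hd : d <> 0) by lia.
  pose proof (Z.div_mod y d Hd) as Hdm. pose proof (Z.mod_pos_bound y d ltac:(lia)) as Hb.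
  assert (Er : E (y mod d)).
  { replace (y mod d) with (y + - (d * (y / d))) by lia. auto. }
  destruct (Z.eq_dec (y mod d) 0) as [H0|H0]. lia.
  exfalso. specialize (Hmin (Z.to_nat (y mod d))). assert (n <= Z.to_nat (y mod d))%nat.
  { apply Hmin. cbv beta. split. lia. rewrite Z2Nat.id; [exact Er|lia]. }
  lia.
Qed.

End PartB.

Section PartC.
Local Open Scope Z_scope.

Lemma eqA (H : grp) (y1 p1 y2 p2 : H) : gmul p1 y2 = gmul y2 p1 ->
  gmul (gmul y1 p1) (gmul y2 p2) = gmul (gmul y1 y2) (gmul p1 p2).
Proof. intro E. rewrite <- !gmulA. f_equal. rewrite !gmulA, E. reflexivity. Qed.

Lemma eqL1 (H : grp) (y q r y0 : H) : gmul q y0 = gmul y0 q ->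
  gmul y (gmul q r) = gmul (gmul (gmul y (ginv y0)) q) (gmul y0 r).
Proof.
  intro E. rewrite <- !gmulA. f_equal. rewrite (gmulA q y0 r), E, <- gmulA. symmetry. apply mulVK.
Qed.

Lemma eqConj (H : grp) (Z y0 : H) : gmul Z y0 = gmul y0 Z -> gmul y0 (gmul Z (ginv y0)) = Z.
Proof. intro E. rewrite gmulA, <- E, <- gmulA, mulgVr. apply mulg1. Qed.

Lemma eqL2 (H : grp) (y q ri y0 : H) : gmul (gmul q ri) y0 = gmul y0 (gmul q ri) ->
  gmul y (gmul q ri) = gmul (gmul (gmul y y0) q) (gmul ri (ginv y0)).
Proof.
  intro E. rewrite <- !gmulA. f_equal. rewrite (gmulA q ri), eqConj; auto.
Qed.

Lemma div_r (H : grp) (x s u : H) : x = gmul u s -> u = gmul x (ginv s).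
Proof. intro E. rewrite E, <- gmulA, mulgVr. symmetry. apply mulg1. Qed.

Lemma sub_div (H : grp) (T : H -> Prop) (u s : H) : subgroup T -> T (gmul u s) -> T s -> T u.
Proof.
  intros [T1 [TM TV]] Hu Hs. replace u with (gmul (gmul u s) (ginv s)). auto.
  rewrite <- gmulA, mulgVr. apply mulg1.
Qed.

Lemma sub_divi (H : grp) (T : H -> Prop) (u s : H) : subgroup T -> T (gmul u (ginv s)) -> T s -> T u.
Proof.
  intros HT Hu Hs. apply (sub_div HT Hu). apply HT; auto.
Qed.

Lemma noeth (H : grp) (L : list H) : (forall a b, In a L -> In b L -> gmul a b = gmul b a) ->
  forall S, subgroup S -> (forall x, S x -> gen (inl L) x) ->
  exists L', (forall y, In y L' -> S y) /\ forall x, S x -> gen (inl L') x.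
Proof.
  induction L as [|a L IH]; intros Hc S HS Hsub.
  - exists nil. split; [intros y []|]. intros x Sx.
    assert (x = gone) as ->.
    { apply (Hsub x Sx (fun z => z = gone)).
      - split; [|split]; auto. intros ? ? -> ->. apply gmul1. intros ? ->. apply inv1.
      - intros y []. }
    apply gen_sub.
  - destruct HS as [S1 [SM SV]].
    assert (HcL : forall a b, In a L -> In b L -> gmul a b = gmul b a) by (intros; apply Hc; simpl; auto).
    assert (Hca : forall y, gen (inl L) y -> cent a y).
    { intros y Hy. apply Hy. apply cent_sub. intros z Hz. unfold cent. apply Hc; simpl; auto. }
    assert (Hcz : forall y e, gen (inl L) y -> gmul (zpow a e) y = gmul y (zpow a e)).
    { intros y e Hy. apply (zpow_in (T := cent y)). apply cent_sub. unfold cent. symmetry. apply Hca; auto. }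
    set (S' := fun x => S x /\ gen (inl L) x).
    assert (HS' : subgroup S').
    { unfold S'. split; [|split].
      - split; auto. apply gen_sub.
      - intros x y [? ?] [? ?]. split; auto. apply gen_sub; auto.
      - intros x [? ?]. split; auto. apply gen_sub; auto. }
    destruct (IH HcL S' HS' (fun x Hx => proj2 Hx)) as [L'' [HL''1 HL''2]].
    assert (Dec : forall x, gen (inl (a :: L)) x -> exists y e, gen (inl L) y /\ x = gmul y (zpow a e)).
    { intros x Hx. apply Hx.
      - split; [|split].
        + exists gone, 0. split. apply gen_sub. now rewrite zpow0, gmul1.
        + intros x1 x2 [y1 [e1 [G1 ->]]] [y2 [e2 [G2 ->]]]. exists (gmul y1 y2), (e1 + e2).
          split. apply gen_sub; auto. rewrite zpow_add. apply eqA. auto.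
        + intros x1 [y1 [e1 [G1 ->]]]. exists (ginv y1), (- e1). split. apply gen_sub; auto.
          rewrite invM, <- zpow_opp. apply Hcz. apply gen_sub; auto.
      - intros z [<-|Hz].
        + exists gone, 1. split. apply gen_sub. now rewrite zpow1, gmul1.
        + exists z, 0. split. now apply gen_incl. now rewrite zpow0, mulg1. }
    set (E := fun e => exists y, gen (inl L) y /\ S (gmul y (zpow a e))).
    assert (E0 : E 0). { exists gone. split. apply gen_sub. now rewrite zpow0, gmul1. }
    assert (EA : forall x y, E x -> E y -> E (x + y)).
    { intros e1 e2 [y1 [G1 S1']] [y2 [G2 S2']]. exists (gmul y1 y2). split. apply gen_sub; auto.
      rewrite zpow_add, <- eqA by auto. auto. }
    assert (EN : forall x, E x -> E (- x)).
    { intros e1 [y1 [G1 S1']]. exists (ginv y1). split. apply gen_sub; auto.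
      rewrite <- (Hcz (ginv y1) (- e1)) by (apply gen_sub; auto). rewrite zpow_opp, <- invM. auto. }
    destruct (Zsub_cyclic E0 EA EN) as [Hz|[d [Hd [[y0 [G0 S0]] Hmul]]]].
    + exists L''. split. intros y Hy. exact (proj1 (HL''1 y Hy)).
      intros x Sx. destruct (Dec x (Hsub x Sx)) as [y [e [Gy ->]]].
      assert (e = 0) as ->. { apply Hz. exists y. auto. }
      rewrite zpow0, mulg1 in *. apply HL''2. split; auto.
    + set (s0 := gmul y0 (zpow a d)).
      exists (s0 :: L''). split.
      { intros y [<-|Hy]; auto. exact (proj1 (HL''1 y Hy)). }
      assert (Claim : forall t y, gen (inl L) y -> S (gmul y (zpow a (d * t))) ->
                        gen (inl (s0 :: L'')) (gmul y (zpow a (d * t)))).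
      { apply (Z.peano_ind (fun t => forall y, gen (inl L) y -> S (gmul y (zpow a (d * t))) ->
                        gen (inl (s0 :: L'')) (gmul y (zpow a (d * t))))).
        - intros y Gy Sy. rewrite Z.mul_0_r, zpow0, mulg1 in *.
          apply (gen_mono (P := inl L'')). intros z Hz. right. auto. apply HL''2. split; auto.
        - intros t IHt y Gy Sy.
          replace (d * Z.succ t) with (d * t + d) in * by lia. rewrite zpow_add in *.
          rewrite (@eqL1 H y _ _ y0) in * by (apply Hcz; auto).
          apply gen_sub.
          + apply IHt. apply gen_sub; auto. apply gen_sub; auto.
            apply (sub_div (conj S1 (conj SM SV)) Sy). exact S0.
          + apply gen_incl. left. reflexivity.
        - intros t IHt y Gy Sy.
          replace (d * Z.pred t) with (d * t + - d) in * by lia. rewrite zpow_add, zpow_opp in *.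
          assert (Ec : gmul (gmul (zpow a (d * t)) (ginv (zpow a d))) y0 =
                       gmul y0 (gmul (zpow a (d * t)) (ginv (zpow a d)))).
          { rewrite <- zpow_opp, <- zpow_add. apply Hcz; auto. }
          rewrite (@eqL2 H y _ _ y0 Ec) in *.
          rewrite <- invM in *. apply gen_sub.
          + apply IHt. apply gen_sub; auto.
            apply (sub_divi (conj S1 (conj SM SV)) Sy). exact S0.
          + apply gen_sub. apply gen_incl. left. reflexivity. }
      intros x Sx. destruct (Dec x (Hsub x Sx)) as [y [e [Gy ->]]].
      destruct (Hmul e (ex_intro _ y (conj Gy Sx))) as [t ->]. apply Claim; auto.
Qed.

End PartC.


Section SubGrp.
Variable H : grp.
Variable S : H -> Prop.
Hypothesis HS : subgroup S.
Definition Scar := {y : H | S y}.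
Definition smul (a b : Scar) : Scar :=
  exist _ (gmul (proj1_sig a) (proj1_sig b)) (proj1 (proj2 HS) _ _ (proj2_sig a) (proj2_sig b)).
Definition sinv (a : Scar) : Scar := exist _ (ginv (proj1_sig a)) (proj2 (proj2 HS) _ (proj2_sig a)).
Definition sone : Scar := exist _ gone (proj1 HS).
Lemma smulA a b c : smul a (smul b c) = smul (smul a b) c.
Proof. apply subset_eq_compat. apply gmulA. Qed.
Lemma smul1 a : smul sone a = a.
Proof. destruct a. apply subset_eq_compat. apply gmul1. Qed.
Lemma smulV a : smul (sinv a) a = sone.
Proof. apply subset_eq_compat. apply gmulV. Qed.
Definition subgrp : grp := Grp smulA smul1 smulV.
End SubGrp.

Lemma free_unique (F : grp) (X : Type) (x : X -> F) (Hx : is_free_on x) (H : grp)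
  (p1 p2 : F -> H) : is_hom p1 -> is_hom p2 -> (forall i, p1 (x i) = p2 (x i)) -> forall w, p1 w = p2 w.
Proof.
  intros H1 H2 E w. destruct (Hx H (fun i => p2 (x i))) as [phi [_ [_ U]]].
  rewrite (U p1 H1 E), (U p2 H2 (fun i => eq_refl)). reflexivity.
Qed.

Lemma free_gen (F : grp) (X : Type) (x : X -> F) (Hx : is_free_on x) :
  forall S, subgroup S -> (forall i, S (x i)) -> forall w, S w.
Proof.
  intros S HS Sx w.
  destruct (Hx (subgrp HS) (fun i => exist _ (x i) (Sx i))) as [phi [Hphi [Ephi _]]].
  assert (E : forall w, proj1_sig (phi w) = w).
  { apply (free_unique Hx (p1 := fun w => proj1_sig (phi w)) (p2 := fun w => w)).
    - intros a b. rewrite Hphi. reflexivity.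
    - intros a b. reflexivity.
    - intro i. rewrite Ephi. reflexivity. }
  rewrite <- E. apply proj2_sig.
Qed.

Section FreeCons.
Variable X : Type.
Definition word := list (X * bool).
Definition evl (H : grp) (h : X -> H) (l : X * bool) : H :=
  if snd l then h (fst l) else ginv (h (fst l)).
Fixpoint ev (H : grp) (h : X -> H) (w : word) : H :=
  match w with nil => gone | l :: w => gmul (evl h l) (ev h w) end.
Definition winv (w : word) : word := rev (map (fun l => (fst l, negb (snd l))) w).

Lemma ev_app (H : grp) (h : X -> H) w1 w2 : ev h (w1 ++ w2) = gmul (ev h w1) (ev h w2).
Proof. induction w1; simpl. now rewrite gmul1. now rewrite IHw1, gmulA. Qed.

Lemma ev_winv (H : grp) (h : X -> H) w : ev h (winv w) = ginv (ev h w).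
Proof.
  induction w as [|[a b] w IH]; simpl. now rewrite inv1.
  unfold winv in *. simpl. rewrite ev_app, IH, invM. simpl. rewrite mulg1. f_equal.
  unfold evl; destruct b; simpl; auto. now rewrite invK.
Qed.

Definition weq (w v : word) : Prop := forall (H : grp) (h : X -> H), ev h w = ev h v.
Definition FCar := {P : word -> Prop | exists w, P = weq w}.
Definition fmk (w : word) : FCar := exist _ (weq w) (ex_intro _ w eq_refl).
Definition frep (c : FCar) : word :=
  proj1_sig (constructive_indefinite_description _ (proj2_sig c)).
Lemma frep_spec c : proj1_sig c = weq (frep c).
Proof. unfold frep. exact (proj2_sig (constructive_indefinite_description (fun w => proj1_sig c = weq w) (proj2_sig c))). Qed.

Lemma fmk_eq w v : weq w v -> fmk w = fmk v.
Proof.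
  intro E. unfold fmk. apply subset_eq_compat. apply functional_extensionality; intro u.
  apply propositional_extensionality. unfold weq in *. split; intros E' H h.
  - rewrite <- E. auto.
  - rewrite E. auto.
Qed.

Lemma fmk_rep c : fmk (frep c) = c.
Proof.
  destruct c as [P HP]. unfold fmk. apply subset_eq_compat. symmetry. exact (frep_spec (exist _ P HP)).
Qed.

Lemma ev_rep (H : grp) (h : X -> H) w : ev h (frep (fmk w)) = ev h w.
Proof.
  pose proof (frep_spec (fmk w)) as E. simpl in E.
  assert (E2 : weq w w) by (intros ? ?; reflexivity).
  rewrite E in E2. apply E2.
Qed.

Definition fmul (c d : FCar) : FCar := fmk (frep c ++ frep d).
Definition finv (c : FCar) : FCar := fmk (winv (frep c)).
Definition fone : FCar := fmk nil.

Lemma fmul_mk a b : fmul (fmk a) (fmk b) = fmk (a ++ b).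
Proof. apply fmk_eq. intros H h. now rewrite !ev_app, !ev_rep. Qed.
Lemma finv_mk a : finv (fmk a) = fmk (winv a).
Proof. apply fmk_eq. intros H h. now rewrite !ev_winv, !ev_rep. Qed.
Lemma fmk_surj c : exists w, c = fmk w.
Proof. exists (frep c). symmetry. apply fmk_rep. Qed.

Lemma fmulA a b c : fmul a (fmul b c) = fmul (fmul a b) c.
Proof.
  destruct (fmk_surj a) as [a' ->]. destruct (fmk_surj b) as [b' ->]. destruct (fmk_surj c) as [c' ->].
  now rewrite !fmul_mk, app_assoc.
Qed.
Lemma fmul1 a : fmul fone a = a.
Proof. destruct (fmk_surj a) as [a' ->]. unfold fone. now rewrite fmul_mk. Qed.
Lemma fmulV a : fmul (finv a) a = fone.
Proof.
  destruct (fmk_surj a) as [a' ->]. rewrite finv_mk, fmul_mk. apply fmk_eq. intros H h.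
  rewrite ev_app, ev_winv. apply gmulV.
Qed.

Definition FG : grp := Grp fmulA fmul1 fmulV.
Definition fgen (i : X) : FG := fmk ((i, true) :: nil).

Lemma FG_free : is_free_on fgen.
Proof.
  intros H h. exists (fun c : FG => ev h (frep c)). split; [|split].
  - intros c d. simpl. unfold fmul. rewrite ev_rep, ev_app. reflexivity.
  - intro i. unfold fgen. rewrite ev_rep. simpl. apply mulg1.
  - intros psi Hpsi Epsi c. destruct (fmk_surj c) as [w ->]. rewrite ev_rep.
    induction w as [|[a b] w IH].
    + apply (hom1 Hpsi).
    + assert (E : fmk ((a, b) :: w) = @gmul FG (fmk ((a, b) :: nil)) (fmk w)).
      { simpl. rewrite fmul_mk. reflexivity. }
      rewrite E, Hpsi, IH. simpl. f_equal. unfold evl. simpl. destruct b.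
      * apply Epsi.
      * assert (E2 : fmk ((a, false) :: nil) = @ginv FG (fgen a)).
        { simpl. unfold fgen. rewrite finv_mk. apply fmk_eq. intros H' h'. reflexivity. }
        rewrite E2, homV by auto. now rewrite Epsi.
Qed.
End FreeCons.


Lemma hom_comp (H1 H2 H3 : grp) (f : H2 -> H3) (g : H1 -> H2) : is_hom f -> is_hom g -> is_hom (fun x => f (g x)).
Proof. intros Hf Hg x y. now rewrite Hg, Hf. Qed.

Lemma qmk_hom (G : grp) (K : G -> Prop) (HK : normal K) : @is_hom G (quot HK) (qmk K).
Proof. intros g h. simpl. symmetry. exact (mul_mk HK g h). Qed.

Lemma qmkE (G : grp) (K : G -> Prop) (HK : normal K) g h : qmk K g = qmk K h -> K (gmul (ginv g) h).
Proof.
  intro E. apply (f_equal (@proj1_sig _ _)) in E. simpl in E.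
  assert (cls K h h). { unfold cls. rewrite gmulV. apply HK. }
  rewrite <- E in H. exact H.
Qed.

Lemma qmk1 (G : grp) (K : G -> Prop) (HK : normal K) g : @qmk G K g = @gone (quot HK) -> K g.
Proof.
  intro E. apply (qmkE HK) in E. destruct HK as [[K1 [KM KV]] _].
  replace g with (ginv (gmul (ginv g) gone)). auto. now rewrite mulg1, invK.
Qed.

Lemma qmk1' (G : grp) (K : G -> Prop) (HK : normal K) g : K g -> @qmk G K g = @gone (quot HK).
Proof. intro Kg. simpl. unfold qone. symmetry. apply (qmk_eq HK). rewrite inv1, gmul1. exact Kg. Qed.

Lemma quot_fp (P P' : grp) (pi : P -> P') (Hpi : is_hom pi) (Spi : forall y, exists x, pi x = y)
  (Lc : list P) (Hker : forall c, pi c = gone <-> gen (inl Lc) c) : fin_pres P -> fin_pres P'.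
Proof.
  intros [n [Fn [x [Hx [phi [Hphi [Sphi [R HR]]]]]]]].
  set (lift := fun c => epsilon (inhabits (@gone Fn)) (fun w => phi w = c)).
  assert (Hlift : forall c, phi (lift c) = c).
  { intro c. apply (epsilon_spec (inhabits (@gone Fn)) (fun w => phi w = c)). apply Sphi. }
  exists n, Fn, x. split; auto. exists (fun w => pi (phi w)). split; [|split].
  - apply hom_comp; auto.
  - intro y. destruct (Spi y) as [z <-]. destruct (Sphi z) as [w <-]. eauto.
  - exists (R ++ map lift Lc). intro w. split.
    + intro Hw. apply Hker in Hw.
      destruct (gen_lift Hphi (P := inl (map lift Lc)) (Q := inl Lc)) with (z := phi w) as [u [Gu Eu]]; auto.
      { intros z Hz. exists (lift z). split; auto. apply in_map; auto. }
      change (ngen (inl (R ++ map lift Lc)) w).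
      assert (N1 : ngen (inl (R ++ map lift Lc)) (gmul (ginv u) w)).
      { apply (ngen_mono (P := inl R)). intros y Hy. apply in_or_app; auto.
        apply HR. rewrite Hphi, homV, Eu by auto. apply gmulV. }
      assert (N2 : ngen (inl (R ++ map lift Lc)) u).
      { apply gen_ngen. apply (gen_mono (P := inl (map lift Lc))); auto. intros y Hy. apply in_or_app; auto. }
      replace w with (gmul u (gmul (ginv u) w)) by apply mulKV.
      destruct (ngen_normal (inl (R ++ map lift Lc))) as [[_ [NM _]] _]. apply NM; auto.
    + intro Hw. apply (Hw (fun w => pi (phi w) = gone)).
      * apply kernel_normal. apply hom_comp; auto.
      * intros r Hr. apply in_app_or in Hr. destruct Hr as [Hr|Hr].
        -- assert (phi r = gone) as ->. { apply HR. intros T HT HT'. auto. } apply (hom1 Hpi).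
        -- apply in_map_iff in Hr. destruct Hr as [c [<- Hc]]. rewrite Hlift. apply Hker. apply gen_incl. exact Hc.
Qed.


Definition comm (H : grp) (u v : H) : H := gmul (gmul (ginv u) (ginv v)) (gmul u v).

Lemma commE (H : grp) (u v : H) : gmul u v = gmul v u -> comm u v = gone.
Proof. intro E. unfold comm. rewrite E, <- gmulA, mulVK. apply gmulV. Qed.

Lemma comm1E (H : grp) (u v : H) : comm u v = gone -> gmul u v = gmul v u.
Proof. intro E. symmetry. apply eq_of_div. rewrite invM. exact E. Qed.

Lemma hom_comm (H H' : grp) (f : H -> H') (Hf : is_hom f) u v : f (comm u v) = comm (f u) (f v).
Proof. unfold comm. rewrite !Hf, !(homV _ Hf). reflexivity. Qed.

Lemma preim_sub (H H' : grp) (f : H -> H') (Hf : is_hom f) (T : H' -> Prop) :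
  subgroup T -> subgroup (fun w => T (f w)).
Proof.
  intros [T1 [TM TV]]. split; [|split].
  - now rewrite hom1.
  - intros x y Hx Hy. rewrite Hf. auto.
  - intros x Hx. rewrite homV; auto.
Qed.

Lemma sub_inter (H : grp) (S T : H -> Prop) : subgroup S -> subgroup T -> subgroup (fun x => S x /\ T x).
Proof.
  intros [S1 [SM SV]] [T1 [TM TV]]. split; [|split]; auto.
  - intros x y [? ?] [? ?]; auto.
  - intros x [? ?]; auto.
Qed.

Lemma image_normal (H H' : grp) (f : H -> H') (Hf : is_hom f) (Sf : forall y, exists x, f x = y)
  (M : H -> Prop) : normal M -> normal (fun q => exists w, M w /\ f w = q).
Proof.
  intros [[M1 [MM MV]] MC]. split; [split; [|split]|].
  - exists gone. split; auto. now apply hom1.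
  - intros a b [w1 [H1 <-]] [w2 [H2 <-]]. exists (gmul w1 w2). split; auto.
  - intros a [w1 [H1 <-]]. exists (ginv w1). split; auto. now apply homV.
  - intros g a [w1 [H1 <-]]. destruct (Sf g) as [g' <-]. exists (gmul (gmul (ginv g') w1) g').
    split; auto. now rewrite !Hf, homV.
Qed.

Lemma eqV1 (H : grp) (c1 c2 X1 X2 : H) : (forall q, gmul c2 q = gmul q c2) ->
  gmul (ginv (gmul c1 c2)) (gmul X1 X2) = gmul (gmul (ginv c1) X1) (gmul (ginv c2) X2).
Proof.
  intro C.
  assert (C' : forall q, gmul (ginv c2) q = gmul q (ginv c2)).
  { intro q. rewrite <- (mulVK c2 (gmul q (ginv c2))). f_equal.
    rewrite gmulA, C, <- gmulA, mulgVr. symmetry. apply mulg1. }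
  rewrite invM, <- !gmulA. rewrite (gmulA X1 (ginv c2) X2), <- C'. rewrite <- gmulA.
  rewrite (gmulA (ginv c1) (ginv c2)), <- C', <- gmulA. reflexivity.
Qed.

Definition gxn (m : nat) (i : nat) : FG {j : nat | j < m} :=
  match lt_dec i m with
  | left p => fgen (exist (fun j => j < m) i p)
  | right _ => gone
  end.

Lemma gxn_fgen m (i : {j : nat | j < m}) : gxn m (proj1_sig i) = fgen i.
Proof.
  destruct i as [i p]. unfold gxn. simpl. destruct (lt_dec i m) as [l|l].
  - f_equal. f_equal. apply proof_irrelevance.
  - contradiction.
Qed.

Lemma eqConj2 (H : grp) (c Y X : H) : (forall q, gmul c q = gmul q c) ->
  gmul (gmul (ginv Y) (gmul c X)) Y = gmul c (gmul (gmul (ginv Y) X) Y).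
Proof.
  intro C. rewrite (gmulA (ginv Y) c X), <- C, <- !gmulA. reflexivity.
Qed.


Lemma ext_fp (P P' : grp) (pi : P -> P') (Hpi : is_hom pi) (Spi : forall y, exists x, pi x = y)
  (Lc : list P) (Hker : forall c, pi c = gone <-> gen (inl Lc) c)
  (Hcent : forall c d, pi c = gone -> gmul c d = gmul d c) : fin_pres P' -> fin_pres P.
Proof.
  intros [n [Fn [x [Hx [psi [Hpsi [Spsi [R HR]]]]]]]].
  set (k := length Lc). set (m := n + k).
  set (W := FG {j : nat | j < m}).
  set (a := fun i => match lt_dec i n with
                     | left p => epsilon (inhabits (@gone P)) (fun y => pi y = psi (x (exist _ i p)))
                     | right _ => @gone P end).
  assert (Ha : forall i (p : i < n), pi (a i) = psi (x (exist _ i p))).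
  { intros i p. unfold a. destruct (lt_dec i n) as [l|l]; [|contradiction].
    assert (exist (fun j => j < n) i l = exist _ i p) as -> by (f_equal; apply proof_irrelevance).
    apply (epsilon_spec (inhabits (@gone P)) (fun y => pi y = psi (x (exist _ i p)))). apply Spi. }
  set (hval := fun i => if lt_dec i n then a i else nth (i - n) Lc gone).
  destruct (FG_free (fun i : {j : nat | j < m} => hval (proj1_sig i))) as [Phi [HPhi [EPhi _]]].
  assert (EPhi' : forall i, i < m -> Phi (gxn m i) = hval i).
  { intros i Hi. pose proof (gxn_fgen (exist (fun j => j < m) i Hi)) as E. simpl in E. rewrite E. apply EPhi. }
  destruct (Hx W (fun i => gxn m (proj1_sig i))) as [iota [Hiota [Eiota _]]].
  assert (Key1 : forall v, pi (Phi (iota v)) = psi v).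
  { apply (free_unique Hx (p1 := fun v => pi (Phi (iota v)))); auto.
    - apply hom_comp; auto. apply hom_comp; auto.
    - intros [i p]. rewrite Eiota. simpl. rewrite EPhi' by lia. unfold hval.
      destruct (lt_dec i n); [|contradiction]. apply Ha. }
  set (zlist := map (fun j => gxn m (n + j)) (seq 0 k)).
  assert (InZ : forall j, j < k -> In (gxn m (n + j)) zlist).
  { intros j Hj. apply in_map_iff. exists j. split; [reflexivity|apply in_seq; lia]. }
  assert (Key2 : forall c, In c Lc -> exists z, In z zlist /\ Phi z = c).
  { intros c Hc. destruct (In_nth Lc c gone Hc) as [j [Hj Ej]].
    exists (gxn m (n + j)). split.
    - apply in_map_iff. exists j. split; [reflexivity|apply in_seq; lia].
    - rewrite EPhi' by lia. unfold hval. destruct (lt_dec (n + j) n); [lia|].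
      replace (n + j - n) with j by lia. exact Ej. }
  assert (Key3 : forall z, In z zlist -> In (Phi z) Lc).
  { intros z Hz. apply in_map_iff in Hz. destruct Hz as [j [<- Hj]]. apply in_seq in Hj.
    rewrite EPhi' by lia. unfold hval. destruct (lt_dec (n + j) n); [lia|].
    replace (n + j - n) with j by lia. apply nth_In. lia. }
  assert (KeyZ : forall u, gen (inl zlist) u -> pi (Phi u) = gone).
  { intros u Hu. apply Hker. apply (gen_image HPhi (P := inl zlist)); auto. }
  assert (KeyLift : forall c, pi c = gone -> exists u, gen (inl zlist) u /\ Phi u = c).
  { intros c Hc. apply Hker in Hc. apply (gen_lift HPhi (P := inl zlist) (Q := inl Lc)); auto. }
  set (comms := flat_map (fun i => map (fun j => comm (gxn m i) (gxn m (n + j))) (seq 0 k)) (seq 0 m)).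
  assert (Hcomms : forall r, In r comms -> exists i j, i < m /\ j < k /\ r = comm (gxn m i) (gxn m (n + j))).
  { intros r Hr. apply in_flat_map in Hr. destruct Hr as [i [Hi Hr]]. apply in_map_iff in Hr.
    destruct Hr as [j [<- Hj]]. apply in_seq in Hi. apply in_seq in Hj. exists i, j. repeat split; lia. }
  assert (Hcommsin : forall i j, i < m -> j < k -> In (comm (gxn m i) (gxn m (n + j))) comms).
  { intros i j Hi Hj. apply in_flat_map. exists i. split. apply in_seq; lia.
    apply in_map_iff. exists j. split; [reflexivity|apply in_seq; lia]. }
  assert (PhiComms : forall r, In r comms -> Phi r = gone).
  { intros r Hr. destruct (Hcomms r Hr) as [i [j [Hi [Hj ->]]]]. rewrite (hom_comm HPhi).
    apply commE. symmetry. apply Hcent. apply Hker. apply gen_incl. apply Key3.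
    apply InZ. lia. }
  set (M0 := ngen (inl comms)).
  pose proof (ngen_normal (inl comms)) as HM0.
  set (Q0 := quot HM0).
  set (rho := fun w : W => (qmk M0 w : Q0)).
  assert (Hrho : is_hom rho) by apply qmk_hom.
  assert (PhiM0 : forall w, M0 w -> Phi w = gone).
  { intros w Hw. apply (Hw (fun w => Phi w = gone)). apply kernel_normal; auto. exact PhiComms. }
  set (Phi0 := fun q : Q0 => Phi (qrep q)).
  assert (Phi0mk : forall w, Phi0 (rho w) = Phi w).
  { intro w. unfold Phi0, rho. pose proof (rep_mk HM0 w) as E. apply PhiM0 in E.
    rewrite HPhi, homV in E by auto. apply eq_of_div. exact E. }
  assert (HPhi0 : is_hom Phi0).
  { intros q1 q2. destruct (qmk_surj q1) as [w1 ->]. destruct (qmk_surj q2) as [w2 ->].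
    change (Phi0 (gmul (rho w1) (rho w2)) = gmul (Phi0 (rho w1)) (Phi0 (rho w2))).
    rewrite <- Hrho, !Phi0mk. apply HPhi. }
  assert (Zcent : forall z, In z zlist -> forall q : Q0, gmul q (rho z) = gmul (rho z) q).
  { intros z Hz q. destruct (qmk_surj q) as [w ->]. change (qmk M0 w) with (rho w). revert w.
    apply (free_gen (@FG_free {j : nat | j < m}) (S := fun w => cent (rho z) (rho w))).
    - apply (preim_sub Hrho (T := cent (rho z))). apply cent_sub.
    - intro i. rewrite <- gxn_fgen. unfold cent.
      apply in_map_iff in Hz. destruct Hz as [j [<- Hj]]. apply in_seq in Hj.
      apply comm1E. rewrite <- (hom_comm Hrho). apply (qmk1' HM0).
      apply ngen_incl. apply Hcommsin. apply proj2_sig. lia. }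
  set (zl0 := map rho zlist).
  assert (Zcent0 : forall c, gen (inl zl0) c -> forall q : Q0, gmul c q = gmul q c).
  { intros c Hc q. apply (Hc (cent q)). apply cent_sub. intros y Hy.
    apply in_map_iff in Hy. destruct Hy as [z [<- Hz]]. unfold cent. symmetry. apply Zcent; auto. }
  set (S0 := fun q : Q0 => gen (inl zl0) q /\ Phi0 q = gone).
  assert (HS0 : subgroup S0). { apply sub_inter. apply gen_sub. apply kernel_sub; auto. }
  destruct (noeth (L := zl0)) with (S := S0) as [T0 [HT01 HT02]]; auto.
  { intros a1 b1 Ha1 Hb1. apply Zcent0. apply gen_incl. auto. }
  { intros q [Hq _]. exact Hq. }
  set (ur := fun r => epsilon (inhabits (@gone W)) (fun u => gen (inl zlist) u /\ Phi u = Phi (iota r))).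
  assert (Hur : forall r, In r R -> gen (inl zlist) (ur r) /\ Phi (ur r) = Phi (iota r)).
  { intros r Hr. apply (epsilon_spec (inhabits (@gone W)) (fun u => gen (inl zlist) u /\ Phi u = Phi (iota r))).
    apply KeyLift. rewrite Key1. apply HR. apply ngen_incl. exact Hr. }
  set (Rel := comms ++ map (fun r => gmul (ginv (ur r)) (iota r)) R ++ map (@qrep W M0) T0).
  assert (InRel1 : forall r, In r comms -> In r Rel).
  { intros. apply in_or_app. auto. }
  assert (InRel2 : forall r, In r R -> In (gmul (ginv (ur r)) (iota r)) Rel).
  { intros. apply in_or_app. right. apply in_or_app. left. apply in_map with (f := fun r => gmul (ginv (ur r)) (iota r)). auto. }
  assert (InRel3 : forall t, In t T0 -> In (qrep t) Rel).
  { intros. apply in_or_app. right. apply in_or_app. right. apply in_map with (f := @qrep W M0). auto. }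
  set (M := ngen (inl Rel)).
  pose proof (ngen_normal (inl Rel)) as HM.
  assert (PhiM : forall w, M w -> Phi w = gone).
  { intros w Hw. apply (Hw (fun w => Phi w = gone)). apply kernel_normal; auto.
    intros r Hr. apply in_app_or in Hr. destruct Hr as [Hr|Hr]. auto.
    apply in_app_or in Hr. destruct Hr as [Hr|Hr].
    - apply in_map_iff in Hr. destruct Hr as [r' [<- Hr']]. rewrite HPhi, homV by auto.
      rewrite (proj2 (Hur r' Hr')). apply gmulV.
    - apply in_map_iff in Hr. destruct Hr as [t [<- Ht]]. apply (HT01 t Ht). }
  exists m, W, (@fgen {j : nat | j < m}). split. apply FG_free.
  exists Phi. split; [exact HPhi|split].
  { intro y. destruct (Spsi (pi y)) as [v Ev].
    set (c := gmul y (ginv (Phi (iota v)))).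
    assert (Hc : pi c = gone). { unfold c. rewrite Hpi, homV, Key1, Ev by auto. apply mulgVr. }
    destruct (KeyLift c Hc) as [u [_ Eu]]. exists (gmul u (iota v)). rewrite HPhi, Eu. unfold c.
    rewrite <- gmulA, gmulV. apply mulg1. }
  exists Rel. intro w. split; [|intro Hw; apply PhiM; exact Hw].
  intro Hw. change (M w).
  assert (M0M : forall w, M0 w -> M w).
  { apply ngen_mono. intros y Hy. apply InRel1. exact Hy. }
  set (Mbar := fun q : Q0 => exists w, M w /\ rho w = q).
  assert (HMbar : normal Mbar).
  { apply image_normal; auto. intro y. destruct (qmk_surj y) as [w2 ->]. exists w2. reflexivity. }
  assert (MbarE : forall w, Mbar (rho w) -> M w).
  { intros w0 [w1 [Mw1 E]]. apply (qmkE HM0) in E. apply M0M in E.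
    replace w0 with (gmul w1 (gmul (ginv w1) w0)) by apply mulKV. apply (proj1 (proj2 (proj1 HM))); auto. }
  assert (MbarPhi : forall q, Mbar q -> Phi0 q = gone).
  { intros q [w1 [Mw1 <-]]. rewrite Phi0mk. auto. }
  (* every element of Q0 is (image of Fn) * (central part) *)
  set (U := fun q : Q0 => exists v c, gen (inl zl0) c /\ q = gmul (rho (iota v)) c).
  assert (HU : subgroup U).
  { split; [|split].
    - exists gone, gone. split. apply gen_sub. rewrite (hom1 Hiota), (hom1 Hrho). symmetry. apply gmul1.
    - intros q1 q2 [v1 [c1 [G1 ->]]] [v2 [c2 [G2 ->]]]. exists (gmul v1 v2), (gmul c1 c2).
      split. apply gen_sub; auto. rewrite Hiota, Hrho. apply eqA. apply Zcent0; auto.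
    - intros q1 [v1 [c1 [G1 ->]]]. exists (ginv v1), (ginv c1). split. apply gen_sub; auto.
      rewrite (homV _ Hiota), (homV _ Hrho), invM. apply Zcent0. apply gen_sub; auto. }
  assert (AllU : forall w, U (rho w)).
  { apply (free_gen (@FG_free {j : nat | j < m}) (S := fun w => U (rho w))).
    - apply (preim_sub Hrho). exact HU.
    - intros [i p]. rewrite <- gxn_fgen. simpl. destruct (lt_dec i n) as [l|l].
      + exists (x (exist _ i l)), gone. split. apply gen_sub. rewrite Eiota, mulg1. reflexivity.
      + exists gone, (rho (gxn m i)). split.
        * apply gen_incl. apply in_map. replace i with (n + (i - n)) by lia. apply InZ. lia.
        * rewrite (hom1 Hiota), (hom1 Hrho). symmetry. apply gmul1. }
  destruct (AllU w) as [v [c [Gc Eq]]].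
  assert (Phiq : Phi0 (rho w) = gone) by (rewrite Phi0mk; exact Hw).
  assert (pic : pi (Phi0 c) = gone).
  { apply (Gc (fun q => pi (Phi0 q) = gone)). apply kernel_sub. apply hom_comp; auto.
    intros y Hy. apply in_map_iff in Hy. destruct Hy as [z [<- Hz]]. rewrite Phi0mk.
    apply KeyZ. apply gen_incl. exact Hz. }
  assert (psiv : psi v = gone).
  { rewrite <- Key1, <- Phi0mk. rewrite Eq, HPhi0 in Phiq. apply (f_equal pi) in Phiq.
    rewrite Hpi, pic, mulg1, (hom1 Hpi) in Phiq. exact Phiq. }
  apply HR in psiv.
  set (V := fun v => exists c', gen (inl zl0) c' /\ Mbar (gmul (ginv c') (rho (iota v)))).
  assert (HV : normal V).
  { destruct HMbar as [[Mb1 [MbM MbV]] MbC].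
    split; [split; [|split]|].
    - exists gone. split. apply gen_sub. rewrite (hom1 Hiota), (hom1 Hrho), inv1, gmul1. exact Mb1.
    - intros v1 v2 [c1 [G1 M1]] [c2 [G2 M2]]. exists (gmul c1 c2). split. apply gen_sub; auto.
      rewrite Hiota, Hrho, eqV1. auto. intro q. apply Zcent0; auto.
    - intros v1 [c1 [G1 M1]]. exists (ginv c1). split. apply gen_sub; auto.
      rewrite (homV _ Hiota), (homV _ Hrho), invK.
      replace (gmul c1 (ginv (rho (iota v1)))) with (ginv (gmul (ginv c1) (rho (iota v1)))). auto.
      rewrite invM, invK. symmetry. apply Zcent0; auto.
    - intros g v1 [c1 [G1 M1]]. exists c1. split; auto.
      rewrite !Hiota, !Hrho, (homV _ Hiota), (homV _ Hrho).
      set (Y := rho (iota g)). set (X := rho (iota v1)).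
      replace (gmul (ginv c1) (gmul (gmul (ginv Y) X) Y)) with (gmul (gmul (ginv Y) (gmul (ginv c1) X)) Y).
      auto.
      apply eqConj2. apply Zcent0. apply (proj2 (proj2 (gen_sub (inl zl0)))). exact G1. }
  assert (Vv : V v).
  { apply psiv; auto. intros r Hr. exists (rho (ur r)). split.
    - apply (gen_image Hrho (P := inl zlist)). intros y Hy. apply in_map. exact Hy. apply (proj1 (Hur r Hr)).
    - exists (gmul (ginv (ur r)) (iota r)). split. apply ngen_incl. apply InRel2. exact Hr.
      rewrite Hrho, (homV _ Hrho). reflexivity. }
  destruct Vv as [c' [Gc' Mm]].
  set (mm := gmul (ginv c') (rho (iota v))) in *.
  assert (Eq2 : rho w = gmul (gmul c' c) mm).
  { rewrite Eq. replace (rho (iota v)) with (gmul c' mm) by (unfold mm; apply mulKV).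
    rewrite <- !gmulA. f_equal. symmetry. apply Zcent0. exact Gc. }
  assert (Mc : Mbar (gmul c' c)).
  { assert (S0c : S0 (gmul c' c)).
    { split. apply (proj1 (proj2 (gen_sub (inl zl0)))); assumption.
      assert (E3 : gmul c' c = gmul (rho w) (ginv mm)) by (rewrite Eq2, <- gmulA, mulgVr; symmetry; apply mulg1).
      rewrite E3, HPhi0, (homV _ HPhi0), Phiq, (MbarPhi mm Mm), inv1. apply gmul1. }
    apply (HT02 _ S0c Mbar). exact (proj1 HMbar). intros t Ht. exists (qrep t). split.
    apply ngen_incl. apply InRel3. exact Ht. apply qmk_rep. }
  apply MbarE. rewrite Eq2. exact (proj1 (proj2 (proj1 HMbar)) _ _ Mc Mm).
Qed.


Lemma ab_or_na (G F : grp) (f : G -> F) :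
  na_image f \/ forall a b, gmul (f a) (f b) = gmul (f b) (f a).
Proof.
  destruct (classic (na_image f)) as [H|H]; [left; exact H|right].
  intros a b. apply NNPP. intro E. apply H. exists a, b. exact E.
Qed.

Theorem mainTheorem7 (F : grp) (HFfree : is_free F) (HFna : nonabelian F)
  (G : grp) (HG : fin_gen G) :
  fin_pres (RF F G) <-> fin_pres (RFna F G).
Proof.
  unfold RF, RFna.
  set (K := kerI (fun _ : G -> F => True)). set (N := kerI (@na_image G F)).
  set (A := kerI (fun f : G -> F => forall a b, gmul (f a) (f b) = gmul (f b) (f a))).
  pose proof (kerI_normal (fun _ : G -> F => True)) as HK.
  pose proof (kerI_normal (@na_image G F)) as HN.
  pose proof (kerI_normal (fun f : G -> F => forall a b, gmul (f a) (f b) = gmul (f b) (f a))) as HA.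
  fold K N A in HK, HN, HA |- *.
  assert (KN : forall g, K g -> N g). { intros g Hg f Hf _. apply Hg; auto. }
  assert (NAK : forall g, N g -> A g -> K g).
  { intros g Ng Ag f Hf _. destruct (ab_or_na f) as [H|H]; [apply Ng|apply Ag]; auto. }
  set (pi := fun c : quot HK => (qmk N (qrep c) : quot HN)).
  assert (pimk : forall g, pi (qmk K g) = qmk N g).
  { intro g. unfold pi. apply (qmk_eq HN). apply KN. apply (rep_mk HK). }
  assert (Hpi : is_hom pi).
  { intros c d. destruct (qmk_surj c) as [g ->]. destruct (qmk_surj d) as [h ->].
    rewrite <- (qmk_hom HK), !pimk. apply (qmk_hom HN). }
  assert (Spi : forall y, exists x, pi x = y).
  { intro y. destruct (qmk_surj y) as [g ->]. exists (qmk K g). apply pimk. }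
  assert (Hcent : forall c d, pi c = gone -> gmul c d = gmul d c).
  { intros c d Hc. destruct (qmk_surj c) as [g ->]. destruct (qmk_surj d) as [h ->].
    rewrite pimk in Hc. apply (@qmk1 _ _ HN) in Hc.
    rewrite <- !(qmk_hom HK). apply (qmk_eq HK). intros f Hf _.
    rewrite Hf, (homV _ Hf). enough (E : f (gmul g h) = f (gmul h g)) by (rewrite E; apply gmulV).
    destruct (ab_or_na f) as [H|H].
    - rewrite !Hf, (Hc f Hf H), gmul1, mulg1. reflexivity.
    - rewrite !Hf. apply H. }
  (* finite generation of the kernel of pi *)
  destruct HG as [n [gn Hgn]].
  set (genn := fun i => match lt_dec i n with left p => gn (exist _ i p) | right _ => gone end).
  set (LB := map (fun i => (qmk A (genn i) : quot HA)) (seq 0 n)).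
  assert (Bcomm : forall g h, gmul (qmk A g : quot HA) (qmk A h) = gmul (qmk A h : quot HA) (qmk A g)).
  { intros g h. rewrite <- !(qmk_hom HA). apply (qmk_eq HA). intros f Hf Hab.
    rewrite Hf, (homV _ Hf). enough (E : f (gmul h g) = f (gmul g h)) by (rewrite E; apply gmulV).
    rewrite !Hf. apply Hab. }
  set (S := fun q : quot HA => exists w, N w /\ qmk A w = q).
  assert (HS : normal S).
  { apply image_normal; auto. apply qmk_hom. intro y. destruct (qmk_surj y) as [w ->]. exists w. reflexivity. }
  destruct (noeth (L := LB)) with (S := S) as [T [HT1 HT2]].
  { intros a b _ _. destruct (qmk_surj a) as [g ->]. destruct (qmk_surj b) as [h ->]. apply Bcomm. }
  { exact (proj1 HS). }
  { intros q [w [_ <-]]. revert w.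
    apply (Hgn (fun w => gen (inl LB) (qmk A w))).
    - apply (preim_sub (qmk_hom HA)). apply gen_sub.
    - intros [i p]. apply gen_incl. apply in_map_iff. exists i. split.
      + unfold genn. destruct (lt_dec i n) as [l|l]; [|contradiction].
        do 3 f_equal. apply proof_irrelevance.
      + apply in_seq. lia. }
  set (gt := fun t : quot HA => epsilon (inhabits (@gone G)) (fun w => N w /\ qmk A w = t)).
  assert (Hgt : forall t, In t T -> N (gt t) /\ qmk A (gt t) = t).
  { intros t Ht. apply (epsilon_spec (inhabits (@gone G)) (fun w => N w /\ qmk A w = t)). apply HT1; auto. }
  set (Lg := map gt T).
  set (Lc := map (fun g => (qmk K g : quot HK)) Lg).
  assert (Hker : forall c, pi c = gone <-> gen (inl Lc) c).
  { intro c. destruct (qmk_surj c) as [g ->]. rewrite pimk. split.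
    - intro Hg. apply (@qmk1 _ _ HN) in Hg.
      assert (Sg : S (qmk A g)) by (exists g; auto).
      destruct (gen_lift (qmk_hom HA) (P := inl Lg) (Q := inl T)) with (z := qmk A g) as [h [Gh Eh]]; auto.
      { intros t Ht. exists (gt t). split. apply in_map. exact Ht. apply (Hgt t Ht). }
      assert (Nh : N h).
      { apply Gh. exact (proj1 HN). intros y Hy. apply in_map_iff in Hy. destruct Hy as [t [<- Ht]].
        apply (Hgt t Ht). }
      apply (qmkE HA) in Eh.
      assert (E : qmk K h = qmk K g).
      { apply (qmk_eq HK). apply NAK; auto. apply (proj1 (proj2 (proj1 HN))); auto. apply (proj2 (proj2 (proj1 HN))); auto. }
      rewrite <- E. apply (gen_image (qmk_hom HK) (P := inl Lg)); auto.
      intros y Hy. apply in_map. exact Hy.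
    - intro Hg. rewrite <- pimk. apply (Hg (fun c => pi c = gone)). apply kernel_sub; auto.
      intros y Hy. apply in_map_iff in Hy. destruct Hy as [g' [<- Hg']]. rewrite pimk.
      apply (@qmk1' _ _ HN). apply in_map_iff in Hg'. destruct Hg' as [t [<- Ht]]. apply (Hgt t Ht). }
  split.
  - apply (quot_fp Hpi Spi Hker).
  - apply (ext_fp Hpi Spi Hker Hcent).
Qed.
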